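(* Let $R$ be a commutative local domain with field of fractions $Q$ and maximal ideal $\mathfrak m$. Let $a,b,c\in R$ be such that the ideal $aR+bR+cR$ cannot be generated by two elements. Set $\alpha=(a,b,c)\in R^3$ and $H=R^3\cap Q\alpha$ (intersection inside $Q^3$). Then: (i) $M=R^3/H$ is an indecomposable, finitely generated, torsion-free $R$-module of rank $2$; (ii) if the integral closure $\overline{R}$ of $R$ in $Q$ is local, then $\mathrm{End}_R(M)$ is a local ring.
   Context: A module $M$ is torsion-free if $M\to M\otimes_R Q$ is injective; its rank is $\dim_Q(M\otimes_RQ)$. *)

(* Defs.v *)
From HB Require Import structures.
From mathcomp Require Import all_boot all_order all_algebra.
From mathcomp Require Import fraction.
Set Implicit Arguments. Unset Strict Implicit. Unset Printing Implicit Defensive.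
Import GRing.Theory.
Local Open Scope ring_scope.

(* A (commutative) ring given as a subring S (a predicate) of a commutative   *)
Definition sub_ideal (A : comNzRingType) (S I : A -> Prop) : Prop :=
  (forall x, I x -> S x) /\ I 0 /\
  (forall x y, I x -> I y -> I (x + y)) /\
  (forall s x, S s -> I x -> I (s * x)).

Definition sub_proper_ideal (A : comNzRingType) (S I : A -> Prop) : Prop :=
  sub_ideal S I /\ ~ I 1.

Definition sub_maximal_ideal (A : comNzRingType) (S I : A -> Prop) : Prop :=
  sub_proper_ideal S I /\
  forall J, sub_proper_ideal S J -> (forall x, I x -> J x) -> forall x, J x <-> I x.

Definition sub_local (A : comNzRingType) (S : A -> Prop) : Prop :=
  (exists I, sub_maximal_ideal S I) /\
  forall I J, sub_maximal_ideal S I -> sub_maximal_ideal S J -> forall x, I x <-> J x.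

Definition local_ring (R : comNzRingType) : Prop := sub_local (fun _ : R => True).

Definition tofr (R : idomainType) : R -> {fraction R} := @FracField.tofrac R.

Definition integral_over (R : idomainType) (x : {fraction R}) : Prop :=
  exists p : {poly R}, p \is monic /\ (map_poly (@tofr R) p).[x] = 0.

Definition integral_closure (R : idomainType) : {fraction R} -> Prop :=
  fun x => integral_over x.

Definition not_two_generated (R : comNzRingType) (a b c : R) : Prop :=
  ~ exists x y : R, forall z : R,
      (exists r s t : R, z = r * a + s * b + t * c) <-> (exists u v : R, z = u * x + v * y).

Definition alpha (R : nzRingType) (a b c : R) : 'rV[R]_3 :=
  \row_(i < 3) nth 0 [:: a; b; c] i.

Definition inH (R : idomainType) (a b c : R) (v : 'rV[R]_3) : Prop :=
  exists q : {fraction R}, forall i : 'I_3,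
    tofr (v ord0 i) = q * tofr (alpha a b c ord0 i).

Definition submodule (R : nzRingType) (M : lmodType R) (A : M -> Prop) : Prop :=
  A 0 /\ forall (r : R) x y, A x -> A y -> A (r *: x + y).

Definition indecomposable (R : nzRingType) (M : lmodType R) : Prop :=
  (exists m : M, m != 0) /\
  forall A B : M -> Prop, submodule A -> submodule B ->
    (forall m, exists x y, A x /\ B y /\ m = x + y) ->
    (forall m, A m -> B m -> m = 0) ->
    (forall m, A m -> m = 0) \/ (forall m, B m -> m = 0).

Definition finitely_generated (R : nzRingType) (M : lmodType R) : Prop :=
  exists (n : nat) (g : 'I_n -> M), forall m : M,
    exists c : 'I_n -> R, m = \sum_(i < n) c i *: g i.

Definition torsion_free (R : idomainType) (M : lmodType R) : Prop :=
  forall (r : R) (m : M), r != 0 -> r *: m = 0 -> m = 0.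

Definition lin_indep (R : nzRingType) (M : lmodType R) (n : nat) (v : 'I_n -> M) : Prop :=
  forall c : 'I_n -> R, \sum_(i < n) c i *: v i = 0 -> forall i, c i = 0.

(* rank n: dim_Q (M (x) Q) = n, i.e. maximal number of R-independent elements *)
Definition has_rank (R : idomainType) (M : lmodType R) (n : nat) : Prop :=
  (exists v : 'I_n -> M, lin_indep v) /\
  forall v : 'I_n.+1 -> M, ~ lin_indep v.

Definition end_unit (R : nzRingType) (M : lmodType R) (f : M -> M) : Prop :=
  exists g : M -> M, linear g /\ cancel f g /\ cancel g f.

Definition End_local (R : nzRingType) (M : lmodType R) : Prop :=
  ~ (forall m : M, m = 0) /\
  (forall f g : M -> M, linear f -> linear g ->
     ~ end_unit f -> ~ end_unit g -> ~ end_unit (fun m => f m + g m)) /\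
  (forall f h : M -> M, linear f -> linear h -> ~ end_unit f ->
     ~ end_unit (h \o f) /\ ~ end_unit (f \o h)).

(* Main.v *)
Require Import Defs.
From HB Require Import structures.
From mathcomp Require Import all_boot all_order all_algebra fingroup perm.
From mathcomp Require Import fraction.
From mathcomp Require Import ring zify.
From Stdlib Require Import Classical.
From mathcomp Require classical_sets.
Import GRing.Theory.
Local Open Scope ring_scope.
Section LocalGen.
Variables (A : comNzRingType) (S : A -> Prop).
Hypotheses (S0 : S 0) (S1 : S 1) (SD : forall x y, S x -> S y -> S (x + y))
  (SM : forall x y, S x -> S y -> S (x * y)).

Definition sunit x := exists y, S y /\ x * y = 1.

Lemma sub_local_max : sub_local S ->
  exists I, sub_maximal_ideal S I /\ (forall x, S x -> ~ sunit x -> I x).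
Proof.
case=> [[I0 mI0] uniq]; exists I0; split => // x Sx nux.
pose J0 := fun z => exists s, S s /\ z = s * x.
have J0id : sub_proper_ideal S J0.
  split; [split; [|split; [|split]]|].
  - by move=> z [s [Ss ->]]; apply: SM.
  - by exists 0; rewrite mul0r.
  - by move=> z1 z2 [s1 [S1' ->]] [s2 [S2' ->]]; exists (s1 + s2); rewrite mulrDl; split => //; apply: SD.
  - by move=> s z Ss [t [St ->]]; exists (s * t); rewrite mulrA; split => //; apply: SM.
  - by move=> [s [Ss E]]; apply: nux; exists s; split => //; rewrite mulrC -E.
pose P := fun B : A -> Prop => (forall z, ~ B z) \/ (sub_proper_ideal S B /\ forall z, J0 z -> B z).
have [J [PJ Jmax]] : exists J, P J /\ (forall B, classical_sets.proper J B -> ~ P B).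
  apply: classical_sets.Zorn_bigcup => F FP Ftot.
  case: (classic (exists B, F B /\ exists z, B z)) => [[B0 [FB0 [z0 B0z0]]]|none]; last first.
    by left => z [B FB Bz]; apply: none; exists B; split => //; exists z.
  have ideal_of : forall B, F B -> forall z, B z -> sub_proper_ideal S B /\ (forall z, J0 z -> B z).
    move=> B FB z Bz; case: (FP B FB) => // /(_ z); tauto.
  have [[[B0S [B00 [B0D B0M]]] B01] J0B0] := ideal_of B0 FB0 z0 B0z0.
  right; split; last by move=> z J0z; exists B0 => //; apply: J0B0.
  split; [split; [|split; [|split]]|].
  - move=> z [B FB Bz]; have [[[BS _] _] _] := ideal_of B FB z Bz; exact: BS.
  - by exists B0.
  - move=> z1 z2 [B1 FB1 B1z] [B2 FB2 B2z].
    case: (Ftot B1 B2 FB1 FB2) => sub.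
    + have [[[_ [_ [BD _]]] _] _] := ideal_of B2 FB2 z2 B2z.
      by exists B2 => //; apply: BD => //; apply: sub.
    + have [[[_ [_ [BD _]]] _] _] := ideal_of B1 FB1 z1 B1z.
      by exists B1 => //; apply: BD => //; apply: sub.
  - move=> s z Ss [B FB Bz]; have [[[_ [_ [_ BM]]] _] _] := ideal_of B FB z Bz.
    by exists B => //; apply: BM.
  - move=> [B FB B1]; have [[_ nB1] _] := ideal_of B FB 1 B1; exact: nB1 B1.
have [Jempty|[Jid J0J]] := PJ.
  exfalso; apply: (Jmax J0); last by right.
  split; first by move=> z Jz; case: (Jempty z Jz).
  by move=> H; apply: (Jempty x); apply: H; exists 1; split => //; rewrite mul1r.
have Jm : sub_maximal_ideal S J.
  split => // J' J'id JJ' z; split; last exact: JJ'.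
  move=> J'z; apply: NNPP => nJz; apply: (Jmax J'); last by right; split => // w /J0J /JJ'.
  by split => // /(_ z J'z).
by apply/(uniq _ _ mI0 Jm); apply: J0J; exists 1; split => //; rewrite mul1r.
Qed.

End LocalGen.

Section DetI.
Variables (R : comUnitRingType) (P : R -> Prop).
Hypotheses (P0 : P 0) (PD : forall x y, P x -> P y -> P (x + y))
  (PM : forall r x, P x -> P (r * x)).

Lemma PN x : P x -> P (- x).
Proof. by move=> Px; rewrite -mulN1r; apply: PM. Qed.

Lemma P_sum (I : Type) (r : seq I) (F : I -> R) :
  (forall i, P (F i)) -> P (\sum_(i <- r) F i).
Proof. by move=> HF; apply: (big_ind P) => // i _; apply: HF. Qed.

Lemma det_1plus n (S : 'M[R]_n) : (forall i j, P (S i j)) ->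
  P (\det (1%:M + S) - 1).
Proof.
move=> HS; rewrite /determinant (bigD1 1%g) //= perm.odd_perm1 expr0 mul1r.
have -> : forall x y : R, x + y - 1 = (x - 1) + y by move=> x y; rewrite addrAC.
apply: PD.
  apply: (big_ind (fun z => P (z - 1))); first by rewrite subrr.
    move=> x y Px Py.
    have -> : x * y - 1 = (x - 1) * (y - 1) + ((x - 1) + (y - 1)).
      by ring.
    by apply: PD => //; [apply: PM | apply: PD].
  move=> i _; rewrite !mxE perm1 eqxx /= mulr1n.
  by have -> : 1 + S i i - 1 = S i i by rewrite addrAC subrr add0r.
apply: (big_ind P) => // s /eqP s1.
have [i si] : exists i, s i != i.
  apply: NNPP => H; apply: s1; apply/permP => i; rewrite perm1.
  by apply/eqP; apply: NNPP => nsi; apply: H; exists i; apply/negP.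
rewrite (bigD1 i) //= mulrCA mulrC; apply: PM.
by rewrite !mxE eq_sym (negPf si) mulr0n add0r.
Qed.
End DetI.

Definition i0 : 'I_3 := @Ordinal 3 0 isT.
Definition i1 : 'I_3 := @Ordinal 3 1 isT.
Definition i2 : 'I_3 := @Ordinal 3 2 isT.

Lemma ord3P (i : 'I_3) : i = i0 \/ i = i1 \/ i = i2.
Proof.
case: i => [[|[|[|n]]] Hi]; [left|right;left|right;right|by []]; exact/val_inj.
Qed.

Lemma sum3 (V : nmodType) (F : 'I_3 -> V) : \sum_i F i = F i0 + F i1 + F i2.
Proof.
rewrite !big_ord_recl big_ord0 addr0 addrA.
by congr (F _ + F _ + F _); apply/val_inj.
Qed.

Lemma trace_lemma (F : fieldType) (E : 'M[F]_3) (al u w : 'rV[F]_3) (l s t : F) :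
  al *m E = l *: al -> u *m E = u + s *: al -> w *m E = t *: al ->
  (forall q, u != q *: al) -> (forall q, w != q *: al) -> al != 0 ->
  \tr E = l + 1.
Proof.
move=> HA HU HW nU nW nA.
pose P := \matrix_(i < 3) nth 0 [:: al; u; w] i.
pose T := \matrix_(i < 3, j < 3)
  nth 0 (nth [::] [:: [:: l; 0; 0]; [:: s; 1; 0]; [:: t; 0; 0]] i) j.
have vP : forall v : 'rV_3, v *m P = v 0 i0 *: al + v 0 i1 *: u + v 0 i2 *: w.
  by move=> v; rewrite mulmx_sum_row sum3 !rowK.
have PE : P *m E = T *m P.
  apply/row_matrixP => i; rewrite !row_mul rowK vP !mxE.
  case: (ord3P i) => [->|[->|->]] /=.
  - by rewrite HA !scale0r !addr0.
  - by rewrite HU scale0r scale1r addr0 addrC.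
  - by rewrite HW !scale0r !addr0.
have Pu : P \in unitmx.
  rewrite unitmxE unitfE; apply/negP => /det0P [v nv vP0].
  have vTP : (v *m T) *m P = 0 by rewrite -mulmxA -PE mulmxA vP0 mul0mx.
  move: vTP; rewrite vP !mxE !sum3 !mxE /= !mulr0 !addr0 mulr1.
  rewrite add0r scale0r addr0 => /eqP; rewrite addr_eq0 => /eqP/(congr1 -%R); rewrite opprK => H1.
  have v10 : v 0 i1 = 0.
    case: (eqVneq (v 0 i1) 0) => [//|nz]; exfalso.
    move/negP: (nU (- ((v 0 i0 * l + v 0 i1 * s + v 0 i2 * t) / v 0 i1))); apply; apply/eqP.
    apply: (scalerI nz); rewrite -H1 scalerA mulrN mulrCA divff // mulr1.
    by rewrite scaleNr.
  move: vP0; rewrite vP v10 scale0r addr0 => /eqP; rewrite addr_eq0 => /eqP/(congr1 -%R); rewrite opprK => H2.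
  have v20 : v 0 i2 = 0.
    case: (eqVneq (v 0 i2) 0) => [//|nz]; exfalso.
    move/negP: (nW (- (v 0 i0 / v 0 i2))); apply; apply/eqP.
    apply: (scalerI nz); rewrite -H2 scalerA mulrN mulrCA divff // mulr1.
    by rewrite scaleNr.
  move: H2; rewrite v20 scale0r => /eqP; rewrite oppr_eq0 scaler_eq0 (negPf nA) orbF => /eqP v00.
  move/negP: nv; apply; apply/eqP/rowP => i; rewrite mxE.
  by case: (ord3P i) => [->|[->|->]]; rewrite ?v00 ?v10 ?v20.
rewrite -[E]mul1mx -(mulVmx Pu) -mulmxA PE mxtrace_mulC -mulmxA mulmxV // mulmx1.
by rewrite /mxtrace sum3 !mxE /= addr0.
Qed.

Section X.
Variable R : idomainType.
Local Notation tf := (@FracField.tofrac R).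
Lemma int_iff (x : {fraction R}) : integral_closure x <-> integralOver tf x.
Proof.
split=> [[p [mp hp]]|[p mp hp]]; exists p => //; first by apply/rootP.
by split => //; apply/rootP.
Qed.
Lemma intS_add (x y : {fraction R}) : integral_closure x -> integral_closure y -> integral_closure (x + y).
Proof. by move=> /int_iff hx /int_iff hy; apply/int_iff; apply: integral_add. Qed.
Lemma intS_mul (x y : {fraction R}) : integral_closure x -> integral_closure y -> integral_closure (x * y).
Proof. by move=> /int_iff hx /int_iff hy; apply/int_iff; apply: integral_mul. Qed.
Lemma intS_R r : integral_closure (tf r).
Proof. by apply/int_iff; apply: integral_id. Qed.
Lemma intS0 : integral_closure (0 : {fraction R}).
Proof. by rewrite -(rmorph0 tf); apply: intS_R. Qed.
Lemma intS1 : integral_closure (1 : {fraction R}).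
Proof. by rewrite -(rmorph1 tf); apply: intS_R. Qed.
Lemma inv_sum (p : {poly R}) (y lam : {fraction R}) :
  p \is monic -> root (map_poly tf p) y -> lam * y = 1 ->
  \sum_(i < (size p).-1) tf p`_i * lam ^+ ((size p).-1 - i) = -1.
Proof.
move=> mp /rootP py ly.
have sz : size p = (size p).-1.+1 by rewrite prednK // size_poly_gt0 monic_neq0.
set d := (size p).-1 in sz *.
move: py; rewrite horner_coef size_map_inj_poly; last by [].
  2: by move=> u v /eqP; rewrite tofrac_eq => /eqP.
have cm i : (map_poly tf p)`_i = tf p`_i by rewrite (coef_map_id0 _ _ (rmorph0 tf)).
rewrite sz big_ord_recr /= cm -/d.
under eq_bigr do rewrite cm.
have -> : p`_d = 1 by move/monicP: mp; rewrite lead_coefE -/d.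
rewrite rmorph1 mul1r => /eqP; rewrite addr_eq0 => /eqP H.
have -> : \sum_(i < d) tf p`_i * lam ^+ (d - i) = lam ^+ d * \sum_(i < d) tf p`_i * y ^+ i.
  rewrite mulr_sumr; apply: eq_bigr => i _.
  have -> : lam ^+ d = lam ^+ (d - i) * lam ^+ i by rewrite -exprD subnK // ltnW.
  by rewrite -mulrA [lam ^+ i * _]mulrCA -exprMn ly expr1n mulr1 mulrC.
by rewrite H mulrN -exprMn ly expr1n.
Qed.
End X.

Section Main.
Variables (R : idomainType) (a b c : R).
Hypothesis ntg : not_two_generated a b c.

Local Notation al := (alpha a b c).

Lemma alE0 : al 0 i0 = a. Proof. by rewrite mxE. Qed.
Lemma alE1 : al 0 i1 = b. Proof. by rewrite mxE. Qed.
Lemma alE2 : al 0 i2 = c. Proof. by rewrite mxE. Qed.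

Lemma ntg_a : ~ exists r s, a = r * b + s * c.
Proof.
move=> [r [s E]]; apply: ntg; exists b, c => z; split.
  by move=> [r' [s' [t' ->]]]; exists (r' * r + s'), (r' * s + t'); rewrite E; ring.
by move=> [u [v ->]]; exists 0, u, v; ring.
Qed.

Lemma ntg_b : ~ exists r s, b = r * a + s * c.
Proof.
move=> [r [s E]]; apply: ntg; exists a, c => z; split.
  by move=> [r' [s' [t' ->]]]; exists (r' + s' * r), (s' * s + t'); rewrite E; ring.
by move=> [u [v ->]]; exists u, 0, v; ring.
Qed.

Lemma ntg_c : ~ exists r s, c = r * a + s * b.
Proof.
move=> [r [s E]]; apply: ntg; exists a, b => z; split.
  by move=> [r' [s' [t' ->]]]; exists (r' + t' * r), (s' + t' * s); rewrite E; ring.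
by move=> [u [v ->]]; exists u, v, 0; ring.
Qed.

Lemma a_neq0 : a != 0.
Proof. by apply/eqP => a0; apply: ntg_a; exists 0, 0; rewrite a0; ring. Qed.
Lemma b_neq0 : b != 0.
Proof. by apply/eqP => b0; apply: ntg_b; exists 0, 0; rewrite b0; ring. Qed.
Lemma c_neq0 : c != 0.
Proof. by apply/eqP => c0; apply: ntg_c; exists 0, 0; rewrite c0; ring. Qed.

Definition NU (x : R) := x \notin GRing.unit.

Lemma syz3 (s0 s1 s2 : R) : a * s0 + b * s1 + c * s2 = 0 -> [/\ NU s0, NU s1 & NU s2].
Proof.
move=> E; split; apply/negP => U.
- apply: ntg_a; exists (- s1 / s0), (- s2 / s0); apply: (mulIr U).
  have -> : (- s1 / s0 * b + - s2 / s0 * c) * s0 = (- s1 * b - s2 * c) * (s0 / s0) by ring.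
  rewrite divrr // mulr1; apply/eqP; rewrite -subr_eq0.
  have -> : a * s0 - (- s1 * b - s2 * c) = a * s0 + b * s1 + c * s2 by ring.
  by rewrite E.
- apply: ntg_b; exists (- s0 / s1), (- s2 / s1); apply: (mulIr U).
  have -> : (- s0 / s1 * a + - s2 / s1 * c) * s1 = (- s0 * a - s2 * c) * (s1 / s1) by ring.
  rewrite divrr // mulr1; apply/eqP; rewrite -subr_eq0.
  have -> : b * s1 - (- s0 * a - s2 * c) = a * s0 + b * s1 + c * s2 by ring.
  by rewrite E.
- apply: ntg_c; exists (- s0 / s2), (- s1 / s2); apply: (mulIr U).
  have -> : (- s0 / s2 * a + - s1 / s2 * b) * s2 = (- s0 * a - s1 * b) * (s2 / s2) by ring.
  rewrite divrr // mulr1; apply/eqP; rewrite -subr_eq0.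
  have -> : c * s2 - (- s0 * a - s1 * b) = a * s0 + b * s1 + c * s2 by ring.
  by rewrite E.
Qed.


Hypothesis loc : local_ring R.

Lemma NU_local : exists I : R -> Prop, sub_maximal_ideal (fun _ => True) I /\
  (forall x, NU x -> I x).
Proof.
have [I [mI HI]] := @sub_local_max R (fun _ => True) I I
  (fun _ _ _ _ => I) (fun _ _ _ _ => I) loc.
exists I; split => // x nx; apply: HI => // [[y [_ xy]]].
by move/negP: nx; apply; apply/unitrPr; exists y.
Qed.

Lemma NUD {x y} : NU x -> NU y -> NU (x + y).
Proof.
have [I [[[[_ [I0 [ID IM]]] I1] _] HI]] := NU_local.
move=> /HI Ix /HI Iy; apply/negP => U.
by apply: I1; rewrite -(mulVr U); apply: IM => //; apply: ID.
Qed.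

Lemma NUM r x : NU x -> NU (r * x).
Proof. by move=> nx; apply/negP; rewrite unitrM => /andP[_ ?]; move/negP: nx. Qed.

Lemma NU0 : NU 0.
Proof. by rewrite /NU unitr0. Qed.

Lemma NUN x : NU x -> NU (- x).
Proof. by move=> nx; rewrite -mulN1r; apply: NUM. Qed.

Lemma NU_unit1 x : NU x -> (1 + x) \is a GRing.unit.
Proof.
move=> nx; apply: contraT => n1x.
have := NUD n1x (NUN _ nx); rewrite addrK /NU unitr1; by [].
Qed.

Lemma NU_unitmx n (S : 'M[R]_n) : (forall i j, NU (S i j)) -> (1%:M + S) \in unitmx.
Proof.
move=> HS; rewrite unitmxE.
have := @det_1plus _ NU NU0 (fun x y => @NUD x y) NUM _ _ HS => /NU_unit1; by rewrite addrC subrK.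
Qed.

Lemma NU_or x : NU (x * (x - 1)) -> NU x \/ NU (x - 1).
Proof.
move=> H; apply: NNPP => nn; move/negP: H; apply; rewrite unitrM.
by apply/andP; split; apply: contraT => ?; case: nn; [left|right].
Qed.

Variables (M : lmodType R) (pi : {linear 'rV[R]_3 -> M}).
Hypotheses (surj : forall m : M, exists v, pi v = m)
  (kerH : forall v, pi v = 0 <-> inH a b c v).

Local Notation tf := (@FracField.tofrac R).
Definition mQ {m n} (A : 'M[R]_(m, n)) := map_mx tf A.

Lemma tf_inj : injective tf.
Proof. by move=> x y /eqP; rewrite tofrac_eq => /eqP. Qed.

Lemma mQ_inj m n : injective (@mQ m n).
Proof. by move=> A B /matrixP H; apply/matrixP => i j; apply: tf_inj; have := H i j; rewrite !mxE. Qed.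

Lemma inHE v : inH a b c v <-> exists q, mQ v = q *: mQ al.
Proof.
split=> [[q Hq]|[q Hq]]; exists q.
  by apply/rowP => i; move: (Hq i); rewrite /tofr !mxE => ->.
by move=> i; move/matrixP: Hq => /(_ ord0 i); rewrite /tofr !mxE => ->.
Qed.

Lemma alQ_neq0 : mQ al != 0.
Proof.
apply/eqP => /matrixP /(_ ord0 i0); rewrite !mxE /=.
by move/eqP; rewrite tofrac_eq0; apply/negP; apply: a_neq0.
Qed.

Lemma al_neq0 : al != 0.
Proof. by apply: contra_neq alQ_neq0 => ->; rewrite /mQ map_mx0. Qed.

Lemma H_NU v : inH a b c v -> forall i, NU (v 0 i).
Proof.
move=> [q Hq].
have key : forall i j, v 0 i * al 0 j = v 0 j * al 0 i.
  by move=> i j; apply: tf_inj; rewrite !rmorphM /= -!/(tofr _) !Hq; ring.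
move=> i; apply/negP => U; case: (ord3P i) => [->|[->|->]] in U *.
- apply: ntg_b; exists (v 0 i1 / v 0 i0), 0.
  apply: (mulIr U); rewrite mul0r addr0 mulrAC divrK //.
  by move: (key i0 i1); rewrite alE0 alE1 => <-; exact: mulrC.
- apply: ntg_a; exists (v 0 i0 / v 0 i1), 0.
  apply: (mulIr U); rewrite mul0r addr0 mulrAC divrK //.
  by move: (key i1 i0); rewrite alE0 alE1 => <-; exact: mulrC.
- apply: ntg_a; exists 0, (v 0 i0 / v 0 i2).
  apply: (mulIr U); rewrite mul0r add0r mulrAC divrK //.
  by move: (key i2 i0); rewrite alE0 alE2 => <-; exact: mulrC.
Qed.

Lemma syz_NU (X : 'M[R]_3) : al *m X = 0 -> forall i j, NU (X i j).
Proof.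
move=> H i j; move/matrixP: H => /(_ ord0 j); rewrite !mxE sum3 /=.
rewrite alE0 alE1 alE2.
by move/syz3 => [? ? ?]; case: (ord3P i) => [->|[->|->]].
Qed.

Lemma pi_al : pi al = 0.
Proof. by apply/kerH; exists 1 => i; rewrite mul1r. Qed.

Definition LiftE (f : M -> M) (E : 'M[R]_3) := forall x, pi (x *m E) = f (pi x).

Lemma lin_props (f : M -> M) : linear f ->
  [/\ f 0 = 0, {morph f : x y / x + y} & forall r x, f (r *: x) = r *: f x].
Proof.
move=> lf.
have f0 : f 0 = 0.
  by have := lf 1 0 0; rewrite !scale1r addr0 => H; apply: (addrI (f 0)); rewrite addr0 -H.
split => // [x y|r x]; first by have := lf 1 x y; rewrite !scale1r.
by have := lf r x 0; rewrite !addr0 f0 addr0.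
Qed.

Lemma lift (f : M -> M) : linear f -> exists E, LiftE f E.
Proof.
move=> /lin_props [f0 fD fZ].
have [v Hv] := fin_all_exists (fun i : 'I_3 => surj (f (pi (delta_mx 0 i)))).
exists (\matrix_(i < 3) v i) => x.
rewrite mulmx_sum_row linear_sum {2}(row_sum_delta x) linear_sum.
rewrite (big_morph f fD f0); apply: eq_bigr => i _.
by rewrite rowK !linearZ /= fZ Hv.
Qed.

Lemma lift_eig (f : M -> M) E : f 0 = 0 -> LiftE f E ->
  exists l, mQ (al *m E) = l *: mQ al.
Proof. by move=> f0 HE; apply/inHE/kerH; rewrite HE pi_al f0. Qed.

Lemma eig_integral E l : mQ (al *m E) = l *: mQ al -> integral_closure l.
Proof.
move=> HE; exists (char_poly E); split; first exact: char_poly_monic.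
rewrite /tofr map_char_poly; apply/rootP; rewrite -eigenvalue_root_char.
by apply/eigenvalueP; exists (mQ al); [rewrite -map_mxM | exact: alQ_neq0].
Qed.


Lemma fg_M : finitely_generated M.
Proof.
exists 3, (fun i => pi (delta_mx 0 i)) => m; have [x <-] := surj m.
exists (fun i => x 0 i); rewrite {1}(row_sum_delta x) linear_sum.
by apply: eq_bigr => i _; rewrite linearZ.
Qed.

Lemma tf_M : torsion_free M.
Proof.
move=> r m nz rm0; have [v vm] := surj m; rewrite -vm in rm0 *.
apply/kerH; have : pi (r *: v) = 0 by rewrite linearZ.
move/kerH => [q Hq]; exists (q / tf r) => i; have := Hq i.
rewrite /tofr mxE rmorphM /= => H.
have nzr : tf r != 0 by rewrite tofrac_eq0.
apply: (mulfI nzr); rewrite H mulrA mulrCA divff // mulr1; reflexivity.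
Qed.

Lemma pi_delta0 : pi (delta_mx 0 i0) != 0.
Proof.
apply/eqP => /kerH [q Hq]; have := Hq i1; have := Hq i0.
rewrite /tofr !mxE /= => H0 H1.
have q0 : q = 0.
  by apply/eqP; move: H1; rewrite mulr0n rmorph0 => /esym/eqP; rewrite mulf_eq0 tofrac_eq0 (negPf b_neq0) orbF.
by move: H0; rewrite q0 mul0r mulr1n rmorph1 => /eqP; rewrite oner_eq0.
Qed.


Lemma rank_M : has_rank M 2.
Proof.
split.
  exists (fun i : 'I_2 => pi (delta_mx 0 (widen_ord (leqnSn 2) i))) => cc H.
  move: H; rewrite (eq_bigr (fun i => pi (cc i *: delta_mx 0 (widen_ord (leqnSn 2) i)))); last first.
    by move=> j _; rewrite linearZ.
  rewrite -linear_sum => /kerH [q Hq].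
  have := Hq i2; have := Hq i1; have := Hq i0.
  rewrite /tofr !summxE !big_ord_recl !big_ord0 !mxE /=.
  rewrite !mulr1 !mulr0 !addr0 !add0r rmorph0 => H0 H1 /esym/eqP.
  rewrite mulf_eq0 tofrac_eq0 (negPf c_neq0) orbF => /eqP q0.
  move: H0 H1; rewrite q0 !mul0r => /eqP; rewrite tofrac_eq0 => /eqP C0 /eqP.
  rewrite tofrac_eq0 => /eqP C1 i.
  case: i => [[|[|//]] Hi].
    by rewrite -C0; congr cc; apply: val_inj.
  by rewrite -C1; congr cc; apply: val_inj.
move=> v li; have [w Hw] := fin_all_exists (fun i => surj (v i)).
pose X := \matrix_(i < 3) w i.
have piX : forall u : 'rV_3, \sum_i u 0 i *: v i = pi (u *m X).
  move=> u; rewrite mulmx_sum_row linear_sum; apply: eq_bigr => i _.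
  by rewrite linearZ rowK Hw.
case: (boolP (\det X == 0)) => [/det0P [u nu uX] | ndX].
  have := li (fun i => u 0 i); rewrite piX uX linear0 => /(_ erefl) H.
  by move/negP: nu; apply; apply/eqP/rowP => i; rewrite mxE H.
pose u := al *m \adj X.
have uX : u *m X = \det X *: al by rewrite -mulmxA mul_adj_mx mul_mx_scalar.
have := li (fun i => u 0 i); rewrite piX uX linearZ /= pi_al scaler0 => /(_ erefl) H.
have u0 : u = 0 by apply/rowP => i; rewrite [RHS]mxE; exact: H.
move: uX; rewrite u0 mul0mx => /esym/eqP.
by rewrite scalemx_eq0 (negPf ndX) (negPf al_neq0).
Qed.


Lemma mQM m n p (A : 'M[R]_(m, n)) (B : 'M[R]_(n, p)) : mQ (A *m B) = mQ A *m mQ B.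
Proof. exact: map_mxM. Qed.
Lemma mQD m n (A B : 'M[R]_(m, n)) : mQ (A + B) = mQ A + mQ B.
Proof. exact: map_mxD. Qed.
Lemma mQB m n (A B : 'M[R]_(m, n)) : mQ (A - B) = mQ A - mQ B.
Proof. exact: map_mxB. Qed.
Lemma mQZ m n k (A : 'M[R]_(m, n)) : mQ (k *: A) = tf k *: mQ A.
Proof. by apply/matrixP => i j; rewrite !mxE rmorphM. Qed.

Lemma trQ (E : 'M[R]_3) : \tr (mQ E) = tf (\tr E).
Proof. by rewrite /mxtrace rmorph_sum; apply: eq_bigr => i _; rewrite mxE. Qed.

Lemma notH v : pi v != 0 -> forall q, mQ v != q *: mQ al.
Proof. by move=> nz q; apply: contra nz => /eqP Hq; apply/eqP/kerH/inHE; exists q. Qed.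

Lemma inH_ex v : pi v = 0 -> exists q, mQ v = q *: mQ al.
Proof. by move/kerH/inHE. Qed.

Lemma pi_NU (N : 'M[R]_3) : (forall z, pi (z *m N) = 0) -> forall i j, NU (N i j).
Proof.
move=> H i j; have := H (delta_mx 0 i); rewrite -rowE => /kerH /H_NU /(_ j).
by rewrite mxE.
Qed.

Lemma NU_shift (E : 'M[R]_3) k : (forall i j, NU (E i j - k *+ (i == j))) -> NU k ->
  forall i j, NU (E i j).
Proof.
move=> H nk i j; have -> : E i j = (E i j - k *+ (i == j)) + k *+ (i == j) by rewrite subrK.
by apply: NUD; [apply: H | case: (i == j); rewrite ?mulr1n ?mulr0n //; apply: NU0].
Qed.


Lemma indec_M : indecomposable M.
Proof.
split; first by exists (pi (delta_mx 0 i0)); exact: pi_delta0.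
move=> A B [A0 Acl] [B0 Bcl] dec disj.
have AD x y : A x -> A y -> A (x + y) by move=> ? ?; rewrite -[x]scale1r; apply: Acl.
have AZ r x : A x -> A (r *: x) by move=> ?; rewrite -[_ *: _]addr0; apply: Acl.
have BD x y : B x -> B y -> B (x + y) by move=> ? ?; rewrite -[x]scale1r; apply: Bcl.
have BZ r x : B x -> B (r *: x) by move=> ?; rewrite -[_ *: _]addr0; apply: Bcl.
have BN x : B x -> B (- x) by move=> ?; rewrite -scaleN1r; apply: BZ.
have AN x : A x -> A (- x) by move=> ?; rewrite -scaleN1r; apply: AZ.
have comp m p p' : A p -> B (m - p) -> A p' -> B (m - p') -> p = p'.
  move=> Ap Bp Ap' Bp'; apply/eqP; rewrite -subr_eq0; apply/eqP; apply: disj.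
    by apply: AD => //; apply: AN.
  have -> : p - p' = (m - p') - (m - p) by rewrite [in RHS]opprB [in RHS]addrC [in RHS]addrA subrK.
  by apply: BD => //; apply: BN.
apply: NNPP => H; have [nA nB] := not_or_and _ _ H.
have [m0 [Am0 nm0]] : exists m0, A m0 /\ m0 != 0.
  apply: NNPP => K; apply: nA => m Am; apply/eqP; apply: NNPP => nz; apply: K.
  by exists m; split => //; apply/negP.
have [m1 [Bm1 nm1]] : exists m1, B m1 /\ m1 != 0.
  apply: NNPP => K; apply: nB => m Bm; apply/eqP; apply: NNPP => nz; apply: K.
  by exists m; split => //; apply/negP.
have [xf Hxf] := fin_all_exists (fun i : 'I_3 => dec (pi (delta_mx 0 i))).
have [v Hv] := fin_all_exists (fun i => surj (xf i)).
have [E HE] : exists E : 'M[R]_3, E = \matrix_(i < 3) v i by eexists.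
have P1 z : A (pi (z *m E)) /\ B (pi z - pi (z *m E)).
  have -> : pi (z *m E) = \sum_i z 0 i *: xf i.
    by rewrite mulmx_sum_row linear_sum; apply: eq_bigr => i _; rewrite linearZ HE rowK Hv.
  split; first by apply: (big_ind A) => // i _; apply: AZ; have [y [? _]] := Hxf i.
  rewrite {1}(row_sum_delta z) linear_sum -sumrB.
  apply: (big_ind B) => // i _; rewrite linearZ -scalerBr; apply: BZ.
  by have [y [_ [By ->]]] := Hxf i; rewrite [xf i + y]addrC addrK.
have P2 z : pi (z *m E *m E) = pi (z *m E).
  have [A1 B1] := P1 (z *m E); have [A2 _] := P1 z.
  by apply: (comp (pi (z *m E))) => //; rewrite subrr.
have PN z : pi (z *m (E *m E - E)) = 0.
  by rewrite mulmxBr linearB /= mulmxA P2 subrr.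
have [lam Hlam] : exists lam, mQ (al *m E) = lam *: mQ al.
  apply: inH_ex; have [A1 B1] := P1 al; rewrite pi_al in B1.
  by symmetry; apply: (comp 0) => //; rewrite subrr.
have [x Hx] := surj m0; have [y Hy] := surj m1.
have pxE : pi (x *m E) = m0.
  have [A1 B1] := P1 x; rewrite Hx in B1 *.
  by apply: (comp m0) => //; rewrite subrr.
have pyE : pi (y *m E) = 0.
  have [A1 B1] := P1 y; rewrite Hy in B1 *.
  by apply: (comp m1) => //; rewrite subr0.
have [s Hs] : exists s, mQ (x *m E *m E - x *m E) = s *: mQ al.
  by apply: inH_ex; rewrite linearB /= P2 subrr.
have [t Ht] : exists t, mQ ((y - y *m E) *m E) = t *: mQ al.
  by apply: inH_ex; rewrite mulmxBl linearB /= P2 pyE subrr.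
have trE : \tr (mQ E) = lam + 1.
  apply: (@trace_lemma _ (mQ E) (mQ al) (mQ (x *m E)) (mQ (y - y *m E)) lam s t).
  - by rewrite -mQM.
  - by rewrite -mQM -Hs mQB addrC subrK.
  - by rewrite -mQM.
  - by apply: notH; rewrite pxE.
  - by apply: notH; rewrite linearB /= pyE subr0 Hy.
  - exact: alQ_neq0.
pose l := \tr E - 1.
have lamE : lam = tf l by rewrite /l rmorphB /= rmorph1 -(trQ E) trE addrK.
have alE : al *m (E - l%:M) = 0.
  apply: mQ_inj; rewrite mulmxBr mul_mx_scalar mQB mQZ Hlam -lamE subrr.
  by rewrite /mQ map_mx0.
have SNU : forall i j, NU (E i j - l *+ (i == j)).
  by move=> i j; have := syz_NU _ alE i j; rewrite !mxE.
have NNU := pi_NU _ PN.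
have Nl : NU (l * (l - 1)).
  have e00 := SNU i0 i0; have e01 := SNU i0 i1; have e02 := SNU i0 i2.
  have e10 := SNU i1 i0; have e20 := SNU i2 i0; have n00 := NNU i0 i0.
  move: e00 e01 e02 e10 e20 n00; rewrite !mxE sum3 /= !mulr1n !mulr0n !subr0.
  set E00 := E i0 i0; set E01 := E i0 i1; set E02 := E i0 i2.
  set E10 := E i1 i0; set E20 := E i2 i0 => e00 e01 e02 e10 e20 n00.
  have -> : l * (l - 1) = (E00 * E00 + E01 * E10 + E02 * E20 - E00)
     - ((2%:R * l - 1) * (E00 - l) + (E00 - l) * (E00 - l) + E01 * E10 + E02 * E20).
    by ring.
  apply: NUD; first exact: n00. apply: NUN. apply: NUD; last exact: (NUM _ _ e20).
  apply: NUD; last exact: (NUM _ _ e10). by apply: NUD; exact: (NUM _ _ e00).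
case: (NU_or _ Nl) => [nl|nl1].
  have EN := NU_shift _ _ SNU nl.
  have Fu : (1%:M + - E) \in unitmx.
    by apply: NU_unitmx => i j; rewrite mxE; apply: NUN.
  move/eqP: nm0; apply; rewrite -pxE.
  have FE : (1%:M + - E) *m E = - (E *m E - E) by rewrite mulmxDl mul1mx mulNmx opprB.
  have -> : x *m E = (x *m invmx (1%:M + - E)) *m ((1%:M + - E) *m E).
    by rewrite -mulmxA (mulmxA (invmx _)) mulVmx // mul1mx.
  by rewrite FE mulmxN linearN /= PN oppr0.
have E1 : forall i j, NU ((E - 1%:M) i j).
  apply: (NU_shift _ (l - 1)) => // i j; rewrite !mxE.
  have -> : E i j - 1 *+ (i == j) - (l - 1) *+ (i == j) = E i j - l *+ (i == j).
    by case: (i == j); rewrite ?mulr1n ?mulr0n ?subr0 //; ring.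
  exact: SNU.
have Eu : E \in unitmx.
  by have := NU_unitmx _ _ E1; rewrite addrC subrK.
move/eqP: nm1; apply; rewrite -Hy.
apply/eqP; rewrite -subr_eq0 -pyE -linearB /=; apply/eqP.
have -> : y - y *m E = - ((y *m invmx E) *m (E *m E - E)).
  rewrite mulmxBr mulmxA -(mulmxA y) mulVmx // mulmx1.
  by rewrite opprB.
by rewrite linearN /= PN oppr0.
Qed.


Lemma trace_H (N : 'M[R]_3) : (forall z, pi (z *m N) = 0) ->
  mQ (al *m N) = tf (\tr N) *: mQ al.
Proof.
move=> HN.
have [q Hq] : exists q : 'I_3 -> {fraction R}, forall i, mQ (row i N) = q i *: mQ al.
  by apply: (@fin_all_exists _ (fun=> {fraction R}) (fun i q => mQ (row i N) = q *: mQ al)) => i; apply: inH_ex; rewrite rowE HN.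
apply/rowP => j; rewrite !mxE rmorph_sum /mxtrace rmorph_sum mulr_suml.
apply: eq_bigr => i _; move/matrixP: (Hq i) => Hqi.
have := Hqi 0 j; have := Hqi 0 i; rewrite !mxE rmorphM /= => -> ->.
by ring.
Qed.

Lemma powA (A : 'M[R]_3) lam : mQ (al *m A) = lam *: mQ al ->
  forall k, mQ (al *m A ^+ k) = lam ^+ k *: mQ al.
Proof.
move=> Hl; elim=> [|k IH]; first by rewrite expr0 mulmx1 scale1r.
by rewrite exprSr -[A ^+ k * A]/(A ^+ k *m A) mulmxA mQM IH -scalemxAl -mQM Hl scalerA -exprSr.
Qed.


Lemma claimA (I : {fraction R} -> Prop) (Iid : sub_proper_ideal (@integral_closure R) I)
  (f : M -> M) A lam : linear f -> end_unit f -> LiftE f A ->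
  mQ (al *m A) = lam *: mQ al -> ~ I lam.
Proof.
move=> lf [g [lg [fg gf]]] HA Hl Il.
have [g0 _ _] := lin_props _ lg; have [G HG] := lift _ lg.
have [mu Hmu] := lift_eig _ _ g0 HG.
set N := A *m G - 1%:M.
have HN : forall z, pi (z *m N) = 0.
  by move=> z; rewrite mulmxBr mulmx1 mulmxA linearB /= HG HA fg subrr.
have HT := trace_H _ HN.
have E1 : mQ (al *m (A *m G)) = (lam * mu) *: mQ al.
  by rewrite mulmxA mQM Hl -scalemxAl -mQM Hmu scalerA.
have E2 : mQ (al *m (A *m G)) = (1 + tf (\tr N)) *: mQ al.
  by rewrite -[A *m G](subrK 1%:M) -/N mulmxDr mulmx1 mQD HT scalerDl scale1r addrC.
have Hlm : lam * mu = 1 + tf (\tr N).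
  have : (lam * mu - (1 + tf (\tr N))) *: mQ al = 0 by rewrite scalerBl -E1 -E2 subrr.
  by move/eqP; rewrite scaler_eq0 (negPf alQ_neq0) orbF subr_eq0 => /eqP.
have tNU : NU (\tr N).
  rewrite /mxtrace; apply: (big_ind NU) => //; [exact: NU0 | move=> x y; exact: NUD | ].
  by move=> i _; apply: (pi_NU _ HN).
have u := NU_unit1 _ tNU.
have [[_ [_ [_ IM]]] I1] := Iid.
apply: I1; have -> : 1 = (mu * tf (1 + \tr N)^-1) * lam.
  have nz : 1 + tf (\tr N) != 0.
    by rewrite -(rmorph1 tf) -rmorphD tofrac_eq0; apply: contraTneq u => ->; rewrite unitr0.
  by rewrite mulrAC [mu * lam]mulrC Hlm -(rmorph1 tf) -rmorphD -rmorphM /= mulrV.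
by apply: IM => //; apply: intS_mul; [apply: (eig_integral _ _ Hmu) | apply: intS_R].
Qed.


Lemma claimB (I : {fraction R} -> Prop)
  (HI : forall x, integral_closure x -> ~ @sunit _ (@integral_closure R) x -> I x)
  (f : M -> M) A lam : linear f -> LiftE f A ->
  mQ (al *m A) = lam *: mQ al -> ~ I lam -> end_unit f.
Proof.
move=> lf HA Hl nI.
have Slam := eig_integral _ _ Hl.
have [y [Sy ly]] : @sunit _ (@integral_closure R) lam.
  by apply: NNPP => ns; apply: nI; apply: HI.
have [p mp py] := (int_iff _ _).1 Sy.
have Hs := inv_sum _ _ _ _ mp py ly.
set d := (size p).-1 in Hs.
pose D' := \sum_(i < d) p`_i *: A ^+ (d.-1 - i).
have HD : mQ (al *m (A *m D')) = - mQ al.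
  rewrite mulmx_sumr mulmx_sumr /mQ raddf_sum /=.
  rewrite (eq_bigr (fun i : 'I_d => (tf p`_i * lam ^+ (d - i)) *: mQ al)); last first.
    move=> i _; rewrite -scalemxAr -scalemxAr.
    have -> : A *m A ^+ (d.-1 - i) = A ^+ (d - i).
      have -> : (d - i = (d.-1 - i).+1)%N by have := ltn_ord i; lia.
      by rewrite exprS.
    by rewrite -/(mQ _) mQZ (powA _ _ Hl) scalerA.
  by rewrite -scaler_suml Hs scaleN1r.
have HD1 : al *m (A *m D' + 1%:M) = 0.
  by apply: mQ_inj; rewrite mulmxDr mulmx1 mQD HD addNr /mQ map_mx0.
have NUe := syz_NU _ HD1.
have Cu : (1%:M + - (A *m D' + 1%:M)) \in unitmx.
  by apply: NU_unitmx => i j; rewrite mxE; apply: NUN.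
have Au : A \in unitmx.
  move: Cu; rewrite opprD addrCA subrr addr0 -mulmxN unitmx_mul.
  by case/andP.
have lamnz : lam != 0 by apply/eqP => l0; move: ly; rewrite l0 mul0r => /eqP; rewrite eq_sym oner_eq0.
have alinv : mQ (al *m invmx A) = lam^-1 *: mQ al.
  apply: (scalerI lamnz); rewrite scalerA mulfV // scale1r.
  by rewrite mQM scalemxAl -Hl -mQM mulmxK.
have ex m : exists v, pi v == m by have [v <-] := surj m; exists v.
pose g m := pi (xchoose (ex m) *m invmx A).
have Hg v : g (pi v) = pi (v *m invmx A).
  have Hv' : pi (xchoose (ex (pi v))) = pi v := eqP (xchooseP (ex (pi v))).
  apply/eqP; rewrite -subr_eq0 -linearB -mulmxBl; apply/eqP/kerH/inHE.
  have [q Hq] : exists q, mQ (xchoose (ex (pi v)) - v) = q *: mQ al.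
    by apply: inH_ex; rewrite linearB /= Hv' subrr.
  by exists (q / lam); rewrite mQM Hq -scalemxAl -mQM alinv scalerA.
exists g; split; [|split].
- move=> r m1 m2; have [v1 <-] := surj m1; have [v2 <-] := surj m2.
  by rewrite -linearZ -linearD /= !Hg mulmxDl -scalemxAl linearD linearZ.
- by move=> m; have [v <-] := surj m; rewrite -HA Hg -mulmxA mulmxV // mulmx1.
- by move=> m; have [v <-] := surj m; rewrite Hg -HA -mulmxA mulVmx // mulmx1.
Qed.


Lemma end_local (Rloc : sub_local (@integral_closure R)) : End_local M.
Proof.
have [I [[Iid _] HI]] := @sub_local_max _ (@integral_closure R) (intS0 R) (intS1 R)
  (intS_add R) (intS_mul R) Rloc.
have [[IS [I0 [ID IM]]] I1] := Iid.
have nonunit_I : forall f A lam, linear f -> ~ end_unit f -> LiftE f A ->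
    mQ (al *m A) = lam *: mQ al -> I lam.
  move=> f A lam lf nu HA Hl; apply: NNPP => nI; apply: nu.
  exact: (claimB I HI f A lam lf HA Hl nI).
split; [|split].
- by move=> H0; move/eqP: pi_delta0; apply; apply: H0.
- move=> f g lf lg nf ng uf.
  have [A HA] := lift _ lf; have [B HB] := lift _ lg.
  have [f0 _ _] := lin_props _ lf; have [g0 _ _] := lin_props _ lg.
  have [la Hla] := lift_eig _ _ f0 HA; have [lb Hlb] := lift_eig _ _ g0 HB.
  have lfg : linear (fun m => f m + g m).
    by move=> r x y; rewrite lf lg scalerDr addrACA.
  have HAB : LiftE (fun m => f m + g m) (A + B).
    by move=> x; rewrite mulmxDr linearD /= HA HB.
  have Hlab : mQ (al *m (A + B)) = (la + lb) *: mQ al.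
    by rewrite mulmxDr mQD Hla Hlb scalerDl.
  apply: (claimA I Iid _ _ _ lfg uf HAB Hlab).
  by apply: ID; [apply: (nonunit_I f A) | apply: (nonunit_I g B)].
- move=> f h lf lh nf.
  have [A HA] := lift _ lf; have [B HB] := lift _ lh.
  have [f0 _ _] := lin_props _ lf; have [h0 _ _] := lin_props _ lh.
  have [la Hla] := lift_eig _ _ f0 HA; have [lb Hlb] := lift_eig _ _ h0 HB.
  have Ila : I la := nonunit_I f A la lf nf HA Hla.
  have Slb := eig_integral _ _ Hlb.
  split.
  + have lhf : linear (h \o f) by move=> r x y /=; rewrite lf lh.
    have HAB : LiftE (h \o f) (A *m B) by move=> x; rewrite mulmxA HB HA.
    have Hlab : mQ (al *m (A *m B)) = (lb * la) *: mQ al.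
      by rewrite mulmxA mQM Hla -scalemxAl -mQM Hlb scalerA mulrC.
    by move=> u; apply: (claimA I Iid _ _ _ lhf u HAB Hlab); apply: IM.
  + have lfh : linear (f \o h) by move=> r x y /=; rewrite lh lf.
    have HAB : LiftE (f \o h) (B *m A) by move=> x; rewrite mulmxA HA HB.
    have Hlab : mQ (al *m (B *m A)) = (lb * la) *: mQ al.
      by rewrite mulmxA mQM Hlb -scalemxAl -mQM Hla scalerA.
    by move=> u; apply: (claimA I Iid _ _ _ lfh u HAB Hlab); apply: IM.
Qed.

End Main.

Theorem mainTheorem7 (R : idomainType) (a b c : R) (M : lmodType R)
    (pi : {linear 'rV[R]_3 -> M}) :
  local_ring R ->
  not_two_generated a b c ->
  (forall m : M, exists v, pi v = m) ->
  (forall v, pi v = 0 <-> inH a b c v) ->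
  (indecomposable M /\ finitely_generated M /\ torsion_free M /\ has_rank M 2) /\
  (sub_local (@integral_closure R) -> End_local M).
Proof.
move=> loc ntg surj kerH; split.
  split; first by eapply indec_M; eauto.
  split; first by eapply fg_M; eauto.
  split; first by eapply tf_M; eauto.
  by eapply rank_M; eauto.
by eapply end_local; eauto.
Qed.
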